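(* Let $G_o=(V,E)$ be an oriented graph with $|V|=n$ and induced partial order $P$ on $V$. Define $g:\hat E\to\mathbb{R}_{\ge0}$ by: for $(u,v)\in E$, $g(u,v)$ is the number of linear extensions $\sigma$ of $P$ with $\sigma(u)=\sigma(v)-1$; for $v\in V$ with out-degree $0$ in $G_o$, $g(v,\hat1)$ is the number of linear extensions $\sigma$ of $P$ with $\sigma(v)=n$; for $v\in V$ with in-degree $0$ in $G_o$, $g(\hat0,v)$ is the number of linear extensions $\sigma$ of $P$ with $\sigma(v)=1$. Then $g$ is a natural flow on $G_o$, and the net $g$-flow from $\hat0$ to $\hat1$ equals $e(P)$, the number of linear extensions of $P$.
   Context: An oriented graph $G_o=(V,E)$ is a simple connected undirected graph together with an acyclic orientation of its edges, regarded as a directed graph (each member of $E$ is an ordered pair). Its induced partial order is: $u<v$ iff there is a directed path from $u$ to $v$. $\hat G_o$ is the directed graph on vertex set $V\cup\{\hat0,\hat1\}$ whose directed edge set $\hat E$ is $E$ together with all edges $(v,\hat1)$ for $v\in V$ of out-degree $0$ in $G_o$ and all edges $(\hat0,v)$ for $v\in V$ of in-degree $0$ in $G_o$. A natural flow on $G_o$ is a function $f:\hat E\to\mathbb{R}_{\ge0}$ such that for every $v\in V$, $\sum_{(x,v)\in\hat E}f(x,v)=\sum_{(v,y)\in\hat E}f(v,y)$ (a nonnegative network flow on $\hat G_o$ with source $\hat0$, sink $\hat1$ and infinite capacities). A linear extension of a partial order $P$ on an $n$-element set $V$ is a bijection $\sigma:V\to[n]$ such that $u<_P v$ implies $\sigma(u)<\sigma(v)$.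 *)

(* Defs.v *)
From HB Require Import structures.
From mathcomp Require Import all_boot all_order all_algebra.
Set Implicit Arguments. Unset Strict Implicit. Unset Printing Implicit Defensive.
Import Order.TTheory GRing.Theory Num.Theory.

Section Oriented.
Variable T : finType.

(* An oriented graph on vertex set T is given by its directed edge relation E.
   It is an acyclic orientation of a simple connected (nonempty) undirected graph. *)
Definition oriented_graph (E : rel T) : Prop :=
  [/\ 0 < #|T|,
      (forall u, ~~ E u u),
      (forall u v, E u v -> ~~ E v u),
      (forall u v, E u v -> ~~ connect E v u)
    & (forall u v, connect (fun x y => E x y || E y x) u v)].

Definition pord (E : rel T) (u v : T) : bool :=
  [exists w, E u w && connect E w v].

Definition outdeg0 (E : rel T) (v : T) : bool := [forall w, ~~ E v w].
Definition indeg0 (E : rel T) (v : T) : bool := [forall w, ~~ E w v].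

(* A linear extension sigma : V -> [n] is encoded as s : T -> 'I_n with
   sigma(v) = s v + 1 (0-based positions). *)
Definition linext (E : rel T) (s : {ffun T -> 'I_#|T|}) : bool :=
  injectiveb s && [forall u, forall v, pord E u v ==> (s u < s v)%N].

Definition linexts (E : rel T) : {set {ffun T -> 'I_#|T|}} :=
  [set s | linext E s].

Definition num_linext (E : rel T) : nat := #|linexts E|.

End Oriented.

Inductive hatV (T : Type) := Bot | Top | Vx of T.
Arguments Bot {T}. Arguments Top {T}.

Definition hatV_to (T : Type) (x : hatV T) : option (option T) :=
  match x with Bot => None | Top => Some None | Vx v => Some (Some v) end.
Definition hatV_of (T : Type) (o : option (option T)) : hatV T :=
  match o with None => Bot | Some None => Top | Some (Some v) => Vx v end.
Lemma hatV_K (T : Type) : cancel (@hatV_to T) (@hatV_of T).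
Proof. by case. Qed.

HB.instance Definition _ (T : finType) := Finite.copy (hatV T) (can_type (@hatV_K T)).

Section Hat.
Variable T : finType.

Definition hatE (E : rel T) (x y : hatV T) : bool :=
  match x, y with
  | Vx u, Vx v => E u v
  | Vx v, Top => outdeg0 E v
  | Bot, Vx v => indeg0 E v
  | _, _ => false
  end.

Definition natural_flow (R : numDomainType) (E : rel T) (f : hatV T -> hatV T -> R) : Prop :=
  (forall x y, hatE E x y -> 0 <= f x y)%R /\
  (forall v : T, (\sum_(x | hatE E x (Vx v)) f x (Vx v) =
                  \sum_(y | hatE E (Vx v) y) f (Vx v) y)%R).

Definition net_flow (R : numDomainType) (E : rel T) (f : hatV T -> hatV T -> R) : R :=
  (\sum_(y | hatE E Bot y) f Bot y - \sum_(x | hatE E x Bot) f x Bot)%R.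

(* the function g of the lemma (only its values on \hat E matter) *)
Definition gflow (R : numDomainType) (E : rel T) (x y : hatV T) : R :=
  match x, y with
  | Vx u, Vx v => (#|[set s in linexts E | (s u).+1 == s v]|)%:R
  | Vx v, Top => (#|[set s in linexts E | (s v).+1 == #|T|]|)%:R
  | Bot, Vx v => (#|[set s in linexts E | nat_of_ord (s v) == 0%N]|)%:R
  | _, _ => 0%R
  end.

End Hat.

(* Main.v *)
Require Import Defs.
From HB Require Import structures.
From mathcomp Require Import all_boot all_order all_algebra all_fingroup zify.
Import Order.TTheory GRing.Theory Num.Theory.
Set Implicit Arguments. Unset Strict Implicit. Unset Printing Implicit Defensive.

Lemma lin_inj (T : finType) (E : rel T) s : s \in linexts E -> injective s.
Proof. by rewrite inE /linext => /andP [/injectiveP]. Qed.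

Lemma lin_lt (T : finType) (E : rel T) s u w :
  s \in linexts E -> pord E u w -> (s u < s w)%N.
Proof.
rewrite inE /linext => /andP [_ /forallP H].
by move: (H u) => /forallP/(_ w)/implyP; apply.
Qed.

Lemma pordE (T : finType) (E : rel T) u w : E u w -> pord E u w.
Proof. by move=> H; apply/existsP; exists w; rewrite H connect0. Qed.

Lemma surjs (T : finType) (s : {ffun T -> 'I_#|T|}) :
  injective s -> forall i, exists u, s u = i.
Proof.
move=> inj i; have hc : (#|'I_#|T| | <= #|T|)%N by rewrite card_ord.
by case/codomP: (inj_card_onto inj hc i) => u ->; exists u.
Qed.

Lemma adj (T : finType) (E : rel T) s x y :
  s \in linexts E -> pord E x y -> (s x).+1 = s y -> E x y.
Proof.
move=> L /existsP [z /andP [Exz czy]] Hs.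
case: (eqVneq z y) => [<-//|nzy].
have pzy : pord E z y.
  move/connectP: czy => [[|z' p] /= Hp Hl]; first by rewrite Hl eqxx in nzy.
  move/andP: Hp => [Ezz' Hp]; apply/existsP; exists z'; rewrite Ezz' /=.
  by apply/connectP; exists p.
have h1 := lin_lt L (pordE Exz); have h2 := lin_lt L pzy. lia.
Qed.

Lemma tperm_lt n (a b i j : 'I_n) : val b = (val a).+1 -> (i < j)%N ->
  ~~ ((val i == val a) && (val j == val b)) -> (tperm a b i < tperm a b j)%N.
Proof.
have ne : forall (p q : 'I_n), p <> q -> (val p != val q).
  by move=> p q H; apply/eqP => /val_inj.
move=> hb hij hn.
case: tpermP => [/(congr1 val) h1|/(congr1 val) h1|/ne h1 /ne h2];
case: tpermP => [/(congr1 val) h3|/(congr1 val) h3|/ne h3 /ne h4];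
move: hb hij hn h1 h3 {ne}; rewrite /=; try (move: h2 h4; rewrite /=); intros; lia.
Qed.


Lemma sum_hatV (T : finType) (v0 : T) (F : hatV T -> nat) :
  \sum_(x : hatV T) F x = F Bot + F Top + \sum_(u : T) F (Vx u).
Proof.
rewrite (bigD1 Bot) //= (bigD1 Top) //= addnA; congr (_ + _).
rewrite (reindex (@Vx T)) /=.
  by apply: eq_bigl.
by exists (fun x => match x with Vx u => u | _ => v0 end) => // [[||u]] //.
Qed.

Lemma sum_unique (T : finType) (P Q : pred T) u0 :
  (forall u, Q u = (u == u0)) -> \sum_(u | P u) (Q u : nat) = P u0.
Proof.
move=> HQ; rewrite big_mkcond (bigD1 u0) //= HQ eqxx big1 ?addn0.
  by case: (P u0).
by move=> u /negbTE hu; rewrite HQ hu; case: (P u).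
Qed.

Lemma card_sumb (I : finType) (A : {set I}) (P : pred I) :
  #|[set s in A | P s]| = \sum_(s in A) (P s : nat).
Proof.
rewrite -sum1_card big_mkcond [RHS]big_mkcond /=; apply: eq_bigr => s _.
by rewrite !inE; case: (s \in A); case: (P s).
Qed.


Definition inA (T : finType) (E : rel T) v (s : {ffun T -> 'I_#|T|}) : nat :=
  (nat_of_ord (s v) == 0%N) + \sum_(u | E u v) ((s u).+1 == s v).
Definition outB (T : finType) (E : rel T) v (s : {ffun T -> 'I_#|T|}) : nat :=
  ((s v).+1 == #|T|) + \sum_(w | E v w) ((s v).+1 == s w).

Definition swp n (T : finType) (a b : 'I_n) (s : {ffun T -> 'I_n}) : {ffun T -> 'I_n} :=
  [ffun x => tperm a b (s x)].
Definition phi (T : finType) v (s : {ffun T -> 'I_#|T|}) :=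
  swp (s v) (insubd (s v) (s v).+1) s.
Definition psi (T : finType) v (s : {ffun T -> 'I_#|T|}) :=
  swp (insubd (s v) (s v).-1) (s v) s.

Lemma swp_lin (T : finType) (E : rel T) (s : {ffun T -> 'I_#|T|}) (a b : 'I_#|T|) :
  s \in linexts E -> val b = (val a).+1 ->
  (forall x y, pord E x y -> s x = a -> s y = b -> False) ->
  swp a b s \in linexts E.
Proof.
move=> L hb H; rewrite inE /linext; apply/andP; split.
  by apply/injectiveP => x y; rewrite !ffunE => /perm_inj /(lin_inj L).
apply/forallP => x; apply/forallP => y; apply/implyP => pxy; rewrite !ffunE.
apply: tperm_lt => //; first exact: lin_lt L pxy.
apply/negP => /andP [/eqP e1 /eqP e2]; apply: (H x y pxy); exact: val_inj.
Qed.

Lemma inA_le1 (T : finType) (E : rel T) v s : s \in linexts E -> (inA E v s <= 1)%N.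
Proof.
move=> L; rewrite /inA; case: eqP => [h|h] /=.
  by rewrite big1 // => u _; rewrite h.
have hk : ((s v).-1 < #|T|)%N by have := ltn_ord (s v); lia.
have [u0 hu0] := surjs (lin_inj L) (Ordinal hk).
rewrite (@sum_unique _ _ _ u0); first by case: (E u0 v).
move=> u; apply/eqP/eqP => [e|->]; last by rewrite hu0 /= prednK // lt0n; apply/eqP.
apply: (lin_inj L); apply: val_inj; rewrite hu0 /=; lia.
Qed.

Lemma outB_le1 (T : finType) (E : rel T) v s : s \in linexts E -> (outB E v s <= 1)%N.
Proof.
move=> L; rewrite /outB; case: eqP => [h|h] /=.
  by rewrite big1 // => u _; rewrite h; case: eqP => // e; have := ltn_ord (s u); rewrite -e ltnn.
have hk : ((s v).+1 < #|T|)%N by rewrite ltn_neqAle ltn_ord andbT; apply/eqP.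
have [u0 hu0] := surjs (lin_inj L) (Ordinal hk).
rewrite (@sum_unique _ _ _ u0); first by case: (E v u0).
move=> u; apply/eqP/eqP => [e|->]; last by rewrite hu0 /=.
apply: (lin_inj L); apply: val_inj; rewrite hu0 /=; lia.
Qed.


Lemma phiY (T : finType) (E : rel T) v s : s \in linexts E -> outB E v s = 0 ->
  phi v s \in linexts E /\ inA E v (phi v s) = 0.
Proof.
move=> L /eqP; rewrite /outB addn_eq0 sum_nat_eq0 eqb0 => /andP [h1 /forallP h2].
have ha : ((s v).+1 < #|T|)%N by rewrite ltn_neqAle ltn_ord andbT.
rewrite /phi; set b := insubd (s v) (s v).+1.
have hb : val b = (val (s v)).+1 by rewrite val_insubd ha.
split.
  apply: swp_lin => // x y pxy ex ey.
  have xv : x = v by apply: (lin_inj L).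
  subst x.
  have Evy : E v y by apply: (adj L pxy); rewrite ey hb.
  by move: (h2 y); rewrite Evy /= eqb0 ey hb eqxx.
apply/eqP; rewrite /inA /swp ffunE tpermL addn_eq0 sum_nat_eq0; apply/andP; split.
  by rewrite hb.
apply/forallP => u; apply/implyP => Euv; rewrite ffunE eqb0; apply/negP => /eqP e.
have H : tperm (s v) b (s u) = s v by apply: val_inj; move: e; rewrite hb; case.
have su : s u = b by rewrite -(tpermK (s v) b (s u)) H tpermL.
by have := lin_lt L (pordE Euv); rewrite su hb ltnNge leqnSn.
Qed.

Lemma psiX (T : finType) (E : rel T) v s : s \in linexts E -> inA E v s = 0 ->
  psi v s \in linexts E /\ outB E v (psi v s) = 0.
Proof.
move=> L /eqP; rewrite /inA addn_eq0 sum_nat_eq0 eqb0 => /andP [h1 /forallP h2].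
have ha : ((s v).-1 < #|T|)%N by apply: leq_ltn_trans (leq_pred _) (ltn_ord _).
have h0 : (0 < s v)%N by rewrite lt0n.
rewrite /psi; set a := insubd (s v) (s v).-1.
have hb : val (s v) = (val a).+1 by rewrite val_insubd ha prednK.
split.
  apply: swp_lin => // x y pxy ex ey.
  have yv : y = v by apply: (lin_inj L).
  subst y.
  have Exv : E x v by apply: (adj L pxy); rewrite ex hb.
  by move: (h2 x); rewrite Exv /= eqb0 ex hb eqxx.
apply/eqP; rewrite /outB /swp ffunE tpermR addn_eq0 sum_nat_eq0; apply/andP; split.
  by rewrite eqb0 -hb neq_ltn ltn_ord.
apply/forallP => w; apply/implyP => Evw; rewrite ffunE eqb0; apply/negP => /eqP e.
have H : tperm a (s v) (s w) = s v by apply: val_inj; rewrite hb e.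
have sw : s w = a by rewrite -(tpermK a (s v) (s w)) H tpermR.
by have := lin_lt L (pordE Evw); rewrite sw hb ltnNge leqnSn.
Qed.

Lemma psiphi (T : finType) v (s : {ffun T -> 'I_#|T|}) :
  ((s v).+1 < #|T|)%N -> psi v (phi v s) = s.
Proof.
move=> ha; rewrite /psi /phi; set b := insubd (s v) (s v).+1.
have hb : val b = (val (s v)).+1 by rewrite val_insubd ha.
have e1 : swp (s v) b s v = b by rewrite /swp ffunE tpermL.
rewrite e1.
have e2 : insubd b (val b).-1 = s v by apply: val_inj; rewrite val_insubd hb /= ltn_ord.
rewrite e2; apply/ffunP => x; rewrite !ffunE; exact: tpermK.
Qed.

Lemma phipsi (T : finType) v (s : {ffun T -> 'I_#|T|}) :
  (0 < s v)%N -> phi v (psi v s) = s.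
Proof.
move=> h0; rewrite /psi /phi; set a := insubd (s v) (s v).-1.
have ha : ((s v).-1 < #|T|)%N by apply: leq_ltn_trans (leq_pred _) (ltn_ord _).
have hb : val (s v) = (val a).+1 by rewrite val_insubd ha prednK.
have e1 : swp a (s v) s v = a by rewrite /swp ffunE tpermR.
rewrite e1.
have e2 : insubd a (val a).+1 = s v by apply: val_inj; rewrite val_insubd -hb ltn_ord.
rewrite e2; apply/ffunP => x; rewrite !ffunE; exact: tpermK.
Qed.


Lemma inA0 (T : finType) (E : rel T) v s : inA E v s = 0 -> (0 < s v)%N.
Proof. by move/eqP; rewrite /inA addn_eq0 eqb0 lt0n => /andP []. Qed.

Lemma outB0 (T : finType) (E : rel T) v (s : {ffun T -> 'I_#|T|}) :
  outB E v s = 0 -> ((s v).+1 < #|T|)%N.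
Proof.
by move/eqP; rewrite /outB addn_eq0 eqb0 ltn_neqAle ltn_ord andbT => /andP [].
Qed.

Lemma sum_inA_outB (T : finType) (E : rel T) v :
  \sum_(s in linexts E) inA E v s = \sum_(s in linexts E) outB E v s.
Proof.
set L := linexts E.
set X := [set s in L | inA E v s == 0].
set Y := [set s in L | outB E v s == 0].
have kA : \sum_(s in L) inA E v s + #|X| = #|L|.
  rewrite (@card_sumb _ L (fun s => inA E v s == 0)) -big_split /= -[X in _ = X]sum1_card; apply: eq_bigr => s Ls.
  by have := inA_le1 v Ls; case: (inA E v s) => [|[|]].
have kB : \sum_(s in L) outB E v s + #|Y| = #|L|.
  rewrite (@card_sumb _ L (fun s => outB E v s == 0)) -big_split /= -[X in _ = X]sum1_card; apply: eq_bigr => s Ls.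
  by have := outB_le1 v Ls; case: (outB E v s) => [|[|]].
have XY : #|X| = #|Y|.
  apply/eqP; rewrite eqn_leq; apply/andP; split.
    have inj : {in X &, injective (psi v)}.
      apply: (can_in_inj (g := phi v)) => s; rewrite inE => /andP [? /eqP h].
      exact/phipsi/(inA0 h).
    rewrite -(card_in_imset inj); apply/subset_leq_card/subsetP => y /imsetP [s].
    rewrite inE => /andP [Ls /eqP h] ->; have [l1 l2] := psiX Ls h.
    by rewrite inE l1 l2.
  have inj : {in Y &, injective (phi v)}.
    apply: (can_in_inj (g := psi v)) => s; rewrite inE => /andP [? /eqP h].
    exact/psiphi/(outB0 h).
  rewrite -(card_in_imset inj); apply/subset_leq_card/subsetP => y /imsetP [s].
  rewrite inE => /andP [Ls /eqP h] ->; have [l1 l2] := phiY Ls h.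
  by rewrite inE l1 l2.
by apply/eqP; rewrite -(eqn_add2r #|X|) kA XY kB.
Qed.


Definition gN (T : finType) (E : rel T) (x y : hatV T) : nat :=
  match x, y with
  | Vx u, Vx v => #|[set s in linexts E | (s u).+1 == s v]|
  | Vx v, Top => #|[set s in linexts E | (s v).+1 == #|T|]|
  | Bot, Vx v => #|[set s in linexts E | nat_of_ord (s v) == 0%N]|
  | _, _ => 0%N
  end.

Lemma gflowE (R : numDomainType) (T : finType) (E : rel T) x y :
  gflow R E x y = ((gN E x y)%:R)%R.
Proof. by case: x => [||u]; case: y => [||w]. Qed.

Lemma bot_lem (T : finType) (E : rel T) v :
  (if indeg0 E v then #|[set s in linexts E | nat_of_ord (s v) == 0%N]| else 0) =
  \sum_(s in linexts E) (nat_of_ord (s v) == 0%N).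
Proof.
case: ifP => [_|/negbT]; first exact: card_sumb.
case/forallPn => u /negPn Euv; rewrite big1 // => s Ls.
by have := lin_lt Ls (pordE Euv); case: eqP => // ->.
Qed.

Lemma top_lem (T : finType) (E : rel T) v :
  (if outdeg0 E v then #|[set s in linexts E | (s v).+1 == #|T|]| else 0) =
  \sum_(s in linexts E) ((s v).+1 == #|T|).
Proof.
case: ifP => [_|/negbT]; first exact: card_sumb.
case/forallPn => w /negPn Evw; rewrite big1 // => s Ls.
have := lin_lt Ls (pordE Evw); have := ltn_ord (s w); case: eqP => // e.
by move=> h1 h2; rewrite e in h2; have := leq_ltn_trans h2 h1; rewrite ltnn.
Qed.

Lemma cons_nat (T : finType) (E : rel T) v :
  \sum_(x | hatE E x (Vx v)) gN E x (Vx v) = \sum_(y | hatE E (Vx v) y) gN E (Vx v) y.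
Proof.
rewrite big_mkcond (sum_hatV v) /= [RHS]big_mkcond (sum_hatV v) /=.
rewrite bot_lem top_lem addn0 add0n -!big_mkcond /=.
under [X in _ + X = _]eq_bigr => u _ do rewrite (@card_sumb _ _ (fun s : {ffun T -> 'I_#|T|} => (s u).+1 == s v)).
under [X in _ = _ + X]eq_bigr => u _ do rewrite (@card_sumb _ _ (fun s : {ffun T -> 'I_#|T|} => (s v).+1 == s u)).
rewrite (exchange_big _ _ _ (fun u => E u v)) (exchange_big _ _ _ (E v)) /=.
rewrite -!big_split /=.
exact: sum_inA_outB.
Qed.

Lemma net_nat (T : finType) (E : rel T) : (0 < #|T|)%N ->
  \sum_(y | hatE E Bot y) gN E Bot y = num_linext E.
Proof.
move=> n0; have [v0 _] := card_gt0P n0.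
rewrite big_mkcond (sum_hatV v0) /=.
under eq_bigr do rewrite bot_lem.
rewrite !add0n exchange_big /= /num_linext -[X in _ = X]sum1_card; apply: eq_bigr => s Ls.
have [u0 hu0] := surjs (lin_inj Ls) (Ordinal n0).
rewrite (@sum_unique _ _ _ u0) // => u; apply/eqP/eqP => [e|->]; last by rewrite hu0.
by apply: (lin_inj Ls); apply: val_inj; rewrite hu0.
Qed.

Local Open Scope ring_scope.

Theorem lemma3p9 (R : realFieldType) (T : finType) (E : rel T) :
  oriented_graph E ->
  natural_flow E (gflow R E) /\ net_flow E (gflow R E) = (num_linext E)%:R.
Proof.
case=> n0 _ _ _ _; split; first split.
- by move=> x y _; rewrite gflowE ler0n.
- move=> v; under eq_bigr do rewrite gflowE.
  under [RHS]eq_bigr do rewrite gflowE.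
  by rewrite -!natr_sum cons_nat.
- rewrite /net_flow; under eq_bigr do rewrite gflowE.
  rewrite -natr_sum net_nat // big_pred0 ?subr0 //.
  by case.
Qed.
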